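(* Let $\alpha_1,\dots,\alpha_4$ be constants, $H=H(t,t^-,q,q^-,p,p^-)$ smooth, and $X=\xi\partial_t+\eta\partial_q+\nu\partial_p$ (coefficients functions of $(t,q,p)$) such that $\Omega=0$, so that $D(C)=(S_+-1)P$ holds on the solutions of the local extremal equation $F_H=\xi\frac{\delta\tilde H}{\delta t}+\eta\frac{\delta\tilde H}{\delta q}+\nu\frac{\delta\tilde H}{\delta p}=0$. If in addition the condition $(S_+-1)P=0$ is imposed, then $I=C$ is a differential first integral: $D(C)=0$ on the solutions of $F_H=0$ satisfying $(S_+-1)P=0$.
   Context: Constant delay $\tau>0$; $t^\pm=t\pm\tau$, $f^\pm=f(t\pm\tau)$; scalar $q,p$. $S_\pm$ are the forward/backward shift operators on expressions; $\xi^\pm=S_\pm(\xi)$ etc.; $H^+=S_+(H)$. $D$ is the total derivative acting on variables at $t^-,t,t^+$. $\tilde H=p^{-}(\alpha_{1}\dot{q}+\alpha_{2}\dot{q}^{-})+p(\alpha_{3}\dot{q}+\alpha_{4}\dot{q}^{-})-H$; $\frac{\delta\tilde H}{\delta p}=\alpha_1\dot q^++(\alpha_2+\alpha_3)\dot q+\alpha_4\dot q^--\partial_p(H+H^+)$, $\frac{\delta\tilde H}{\delta q}=-\big(\alpha_4\dot p^++(\alpha_2+\alpha_3)\dot p+\alpha_1\dot p^-+\partial_q(H+H^+)\big)$, $\frac{\delta\tilde H}{\delta t}=D[\alpha_2(p\dot q-p^-\dot q^-)+\alpha_4(p^+\dot q-p\dot q^-)]+D(H)-\partial_t(H+H^+)$.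 $\Omega=\nu^{-}(\alpha_{1}\dot{q}+\alpha_{2}\dot{q}^{-})+p^{-}(\alpha_{1}D(\eta)+\alpha_{2}D(\eta^{-}))+\nu(\alpha_{3}\dot{q}+\alpha_{4}\dot{q}^{-})+p(\alpha_{3}D(\eta)+\alpha_{4}D(\eta^{-}))+(\alpha_{2}p^{-}+\alpha_{4}p)\dot{q}^{-}D(\xi-\xi^{-})-\xi H_t-\eta H_q-\nu H_p-\xi^{-}H_{t^-}-\eta^{-}H_{q^-}-\nu^{-}H_{p^-}-HD(\xi)$. $C=\eta(\alpha_{4}p^{+}+(\alpha_{2}+\alpha_{3})p+\alpha_{1}p^{-})-\xi\big(\alpha_{2}(p\dot{q}-p^{-}\dot{q}^{-})+\alpha_{4}(p^{+}\dot{q}-p\dot{q}^{-})+H\big)$, $P=(\alpha_{2}p^{-}+\alpha_{4}p)D(\eta^{-})+\nu^{-}(\alpha_{1}\dot{q}+\alpha_{2}\dot{q}^{-})-(\alpha_{2}p^{-}+\alpha_{4}p)\dot{q}^{-}D(\xi^{-})-\xi^{-}H_{t^-}-\eta^{-}H_{q^-}-\nu^{-}H_{p^-}$. Equations are considered with $t^+-t=t-t^-=\tau$. *)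

(* Defs.v *)
From HB Require Import structures.
From mathcomp Require Import all_boot all_order all_algebra.
From mathcomp Require Import all_classical all_reals all_analysis.
Set Implicit Arguments. Unset Strict Implicit. Unset Printing Implicit Defensive.
Import Order.TTheory GRing.Theory Num.Theory.
Import numFieldNormedType.Exports.
Local Open Scope ring_scope.

Definition smooth1 {R : realType} (f : R -> R) : Prop :=
  forall (n : nat) (x : R), derivable (derive1n n f) x 1.

Definition partial {R : realType} {m : nat} (i : 'I_m) (f : 'rV[R]_m -> R)
  : 'rV[R]_m -> R := fun x => derive f x (delta_mx 0 i).

Fixpoint Ck {R : realType} {m : nat} (k : nat) (f : 'rV[R]_m -> R) : Prop :=
  match k with
  | 0 => continuous f
  | k'.+1 => (forall x, differentiable f x) /\ (forall i : 'I_m, Ck k' (partial i f))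
  end.

Definition smooth {R : realType} {m : nat} (f : 'rV[R]_m -> R) : Prop :=
  forall k, Ck k f.

Definition vec3 {R : realType} (t q p : R) : 'rV[R]_3 :=
  \row_(i < 3) [:: t; q; p]`_i.
Definition vec6 {R : realType} (t tm q qm p pm : R) : 'rV[R]_6 :=
  \row_(i < 6) [:: t; tm; q; qm; p; pm]`_i.

Definition D {R : realType} (f : R -> R) : R -> R := derive1 f.
Definition Sm {R : realType} (tau : R) (f : R -> R) : R -> R := fun t => f (t - tau).
Definition Sp {R : realType} (tau : R) (f : R -> R) : R -> R := fun t => f (t + tau).

Definition along {R : realType} (xi : 'rV[R]_3 -> R) (q p : R -> R) : R -> R :=
  fun t => xi (vec3 t (q t) (p t)).

Definition pt6 {R : realType} (tau : R) (q p : R -> R) (t : R) : 'rV[R]_6 :=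
  vec6 t (t - tau) (q t) (q (t - tau)) (p t) (p (t - tau)).

Definition Hal {R : realType} (tau : R) (H : 'rV[R]_6 -> R) (q p : R -> R) : R -> R :=
  fun t => H (pt6 tau q p t).

(* partial derivative of H in slot i, along the trajectory.
   slots: 0 = t, 1 = t^-, 2 = q, 3 = q^-, 4 = p, 5 = p^- *)
Definition Hd {R : realType} (tau : R) (H : 'rV[R]_6 -> R) (q p : R -> R) (i : nat)
  : R -> R := fun t => partial (@inord 5 i) H (pt6 tau q p t).

Definition dHp {R : realType} (tau a1 a2 a3 a4 : R) (H : 'rV[R]_6 -> R)
  (q p : R -> R) (t : R) : R :=
  a1 * D q (t + tau) + (a2 + a3) * D q t + a4 * D q (t - tau)
  - (Hd tau H q p 4 t + Hd tau H q p 5 (t + tau)).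

Definition dHq {R : realType} (tau a1 a2 a3 a4 : R) (H : 'rV[R]_6 -> R)
  (q p : R -> R) (t : R) : R :=
  - (a4 * D p (t + tau) + (a2 + a3) * D p t + a1 * D p (t - tau)
     + (Hd tau H q p 2 t + Hd tau H q p 3 (t + tau))).

Definition Gx {R : realType} (tau a2 a4 : R) (q p : R -> R) (t : R) : R :=
  a2 * (p t * D q t - p (t - tau) * D q (t - tau))
  + a4 * (p (t + tau) * D q t - p t * D q (t - tau)).

Definition dHt {R : realType} (tau a1 a2 a3 a4 : R) (H : 'rV[R]_6 -> R)
  (q p : R -> R) (t : R) : R :=
  D (Gx tau a2 a4 q p) t + D (Hal tau H q p) t
  - (Hd tau H q p 0 t + Hd tau H q p 1 (t + tau)).

Definition FH {R : realType} (tau a1 a2 a3 a4 : R) (H : 'rV[R]_6 -> R)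
  (xi eta nu : 'rV[R]_3 -> R) (q p : R -> R) (t : R) : R :=
  along xi q p t * dHt tau a1 a2 a3 a4 H q p t
  + along eta q p t * dHq tau a1 a2 a3 a4 H q p t
  + along nu q p t * dHp tau a1 a2 a3 a4 H q p t.

Definition Omega {R : realType} (tau a1 a2 a3 a4 : R) (H : 'rV[R]_6 -> R)
  (xi eta nu : 'rV[R]_3 -> R) (q p : R -> R) (t : R) : R :=
  let xs := along xi q p in
  let es := along eta q p in
  let ns := along nu q p in
  Sm tau ns t * (a1 * D q t + a2 * D q (t - tau))
  + p (t - tau) * (a1 * D es t + a2 * D (Sm tau es) t)
  + ns t * (a3 * D q t + a4 * D q (t - tau))
  + p t * (a3 * D es t + a4 * D (Sm tau es) t)
  + (a2 * p (t - tau) + a4 * p t) * D q (t - tau) * D (fun s => xs s - Sm tau xs s) t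
  - xs t * Hd tau H q p 0 t - es t * Hd tau H q p 2 t - ns t * Hd tau H q p 4 t
  - Sm tau xs t * Hd tau H q p 1 t - Sm tau es t * Hd tau H q p 3 t
  - Sm tau ns t * Hd tau H q p 5 t
  - Hal tau H q p t * D xs t.

Definition Cfi {R : realType} (tau a1 a2 a3 a4 : R) (H : 'rV[R]_6 -> R)
  (xi eta nu : 'rV[R]_3 -> R) (q p : R -> R) (t : R) : R :=
  along eta q p t * (a4 * p (t + tau) + (a2 + a3) * p t + a1 * p (t - tau))
  - along xi q p t * (Gx tau a2 a4 q p t + Hal tau H q p t).

Definition Pfi {R : realType} (tau a1 a2 a3 a4 : R) (H : 'rV[R]_6 -> R)
  (xi eta nu : 'rV[R]_3 -> R) (q p : R -> R) (t : R) : R :=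
  let xs := along xi q p in
  let es := along eta q p in
  let ns := along nu q p in
  (a2 * p (t - tau) + a4 * p t) * D (Sm tau es) t
  + Sm tau ns t * (a1 * D q t + a2 * D q (t - tau))
  - (a2 * p (t - tau) + a4 * p t) * D q (t - tau) * D (Sm tau xs) t
  - Sm tau xs t * Hd tau H q p 1 t - Sm tau es t * Hd tau H q p 3 t
  - Sm tau ns t * Hd tau H q p 5 t.

(* Main.v *)
Require Import Defs.
From HB Require Import structures.
From mathcomp Require Import all_boot all_order all_algebra.
From mathcomp Require Import all_classical all_reals all_analysis.
From mathcomp Require Import ring lra.
Import Order.TTheory GRing.Theory Num.Theory.
Import numFieldNormedType.Exports.
Local Open Scope ring_scope.

Section H.
Variable R : realType.
Implicit Types f g : R -> R.

Lemma dshift f c t : derivable f (t + c) 1 -> derivable (fun s => f (s + c)) t 1.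
Proof.
have E : (fun h : R => h^-1 *: (((fun s => f (s + c)) \o shift t) (h *: (1:R)) - f (t + c)))
  = (fun h => h^-1 *: ((f \o shift (t + c)) (h *: 1) - f (t + c))).
  by apply: funext => h /=; rewrite addrA.
by rewrite /derivable E.
Qed.

Lemma Dshift f c t : D (fun s => f (s + c)) t = D f (t + c).
Proof.
have E : (fun h : R => h^-1 *: ((fun s => f (s + c)) (h + t) - f (t + c)))
  = (fun h => h^-1 *: (f (h + (t + c)) - f (t + c))).
  by apply: funext => h /=; rewrite addrA.
by rewrite /D /derive1 E.
Qed.

Lemma d_add f g t : derivable f t 1 -> derivable g t 1 -> derivable (fun s => f s + g s) t 1.
Proof. move=> a b; exact: (derivableD a b). Qed.
Lemma d_sub f g t : derivable f t 1 -> derivable g t 1 -> derivable (fun s => f s - g s) t 1.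
Proof. move=> a b; exact: (derivableB a b). Qed.
Lemma d_mul f g t : derivable f t 1 -> derivable g t 1 -> derivable (fun s => f s * g s) t 1.
Proof. move=> a b; exact: (derivableM a b). Qed.
Lemma d_cst (c : R) (t : R) : derivable (fun _ : R => c) t 1.
Proof. exact: derivable_cst. Qed.
Lemma D_add f g t : derivable f t 1 -> derivable g t 1 -> D (fun s => f s + g s) t = D f t + D g t.
Proof. move=> a b; rewrite /D !derive1E; exact: (deriveD a b). Qed.
Lemma D_sub f g t : derivable f t 1 -> derivable g t 1 -> D (fun s => f s - g s) t = D f t - D g t.
Proof. move=> a b; rewrite /D !derive1E; exact: (deriveB a b). Qed.
Lemma D_mul f g t : derivable f t 1 -> derivable g t 1 -> D (fun s => f s * g s) t = f t * D g t + g t * D f t.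
Proof. move=> a b; rewrite /D !derive1E; exact: (deriveM a b). Qed.
Lemma D_cst (c : R) (t : R) : D (fun _ => c) t = 0.
Proof. rewrite /D; exact: derive1_cst. Qed.

Lemma d_comp m (F : 'rV[R]_m -> R) (c : R -> 'rV[R]_m) t :
  (forall x, differentiable F x) ->
  (forall j, derivable (fun s => c s ord0 j) t 1) ->
  derivable (fun s => F (c s)) t 1.
Proof.
move=> dF dc; apply/derivable1_diffP.
apply: (differentiable_comp (f := c) (g := F)); last exact: dF.
apply/derivable1_diffP; apply/derivable_mxP => i j.
by rewrite (ord1 i).
Qed.
Lemma d_id (t : R) : derivable (fun s : R => s) t 1.
Proof. exact: derivable_id. Qed.

Lemma comb (a b c : R) : a = 0 -> b = 0 -> c = 0 -> forall x, x = - a + b + c -> x = 0.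
Proof. by move=> -> -> -> x ->; rewrite oppr0 !addr0. Qed.
End H.
Arguments dshift {R}.
Arguments Dshift {R}.
Arguments d_add {R f g t}.
Arguments d_sub {R f g t}.
Arguments d_mul {R f g t}.
Arguments d_cst {R}.
Arguments D_add {R f g t}.
Arguments D_sub {R f g t}.
Arguments D_mul {R f g t}.
Arguments D_cst {R}.
Arguments d_comp {R}.
Arguments d_id {R}.
Arguments comb {R}.

Lemma smooth_diff (R : realType) m (f : 'rV[R]_m -> R) : smooth f -> forall x, differentiable f x.
Proof. by move=> sf; case: (sf 1%N). Qed.

Lemma d_along (R : realType) (xi : 'rV[R]_3 -> R) (q p : R -> R) (t : R) :
  smooth xi -> (forall x, derivable q x 1) -> (forall x, derivable p x 1) ->
  derivable (along xi q p) t 1.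
Proof.
move=> sx dq dp; apply: (@d_comp _ _ _ (fun s => vec3 s (q s) (p s))).
  exact: smooth_diff.
move=> j.
have -> : (fun s => vec3 s (q s) (p s) ord0 j) = (fun s => [:: s; q s; p s]`_j).
  by apply: funext => s; rewrite /vec3 mxE.
case: j => [[|[|[|j]]] Hj] /=.
- exact: d_id.
- exact: dq.
- exact: dp.
- by [].
Qed.

Lemma d_Hal (R : realType) tau (H : 'rV[R]_6 -> R) (q p : R -> R) (t : R) :
  smooth H -> (forall x, derivable q x 1) -> (forall x, derivable p x 1) ->
  derivable (Hal tau H q p) t 1.
Proof.
move=> sx dq dp; apply: (@d_comp _ _ _ (pt6 tau q p)).
  exact: smooth_diff.
move=> j.
have -> : (fun s => pt6 tau q p s ord0 j) =
   (fun s => [:: s; s - tau; q s; q (s - tau); p s; p (s - tau)]`_j).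
  by apply: funext => s; rewrite /pt6 /vec6 mxE.
case: j => [[|[|[|[|[|[|j]]]]]] Hj] /=.
- exact: d_id.
- apply: d_sub; [exact: d_id | exact: d_cst].
- exact: dq.
- apply: dshift; exact: dq.
- exact: dp.
- apply: dshift; exact: dp.
- by [].
Qed.

Lemma d_Gx (R : realType) (tau a2 a4 : R) (q p : R -> R) (t : R) :
  (forall x, derivable (D q) x 1) -> (forall x, derivable p x 1) ->
  derivable (Gx tau a2 a4 q p) t 1.
Proof.
move=> dDq dp; rewrite /Gx.
have dsp : forall c x, derivable (fun s => p (s + c)) x 1.
  by move=> c x; apply: dshift; exact: dp.
have dsq : forall c x, derivable (fun s => D q (s + c)) x 1.
  by move=> c x; apply: dshift; exact: dDq.
apply: d_add; apply: d_mul.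
- exact: d_cst.
- apply: d_sub; apply: d_mul; [exact: dp|exact: dDq|exact: (dsp (-tau))|exact: (dsq (-tau))].
- exact: d_cst.
- apply: d_sub; apply: d_mul; [exact: (dsp tau)|exact: dDq|exact: dp|exact: (dsq (-tau))].
Qed.

Lemma sm1 (R : realType) (q : R -> R) : smooth1 q -> (forall x, derivable q x 1) /\ (forall x, derivable (D q) x 1).
Proof. by move=> s; split=> x; [exact: (s 0%N x)|exact: (s 1%N x)]. Qed.

Theorem proposition3 (R : realType) (tau a1 a2 a3 a4 : R)
  (H : 'rV[R]_6 -> R) (xi eta nu : 'rV[R]_3 -> R) :
  0 < tau ->
  smooth H -> smooth xi -> smooth eta -> smooth nu ->
  (forall q p : R -> R, smooth1 q -> smooth1 p ->
     forall t, Omega tau a1 a2 a3 a4 H xi eta nu q p t = 0) ->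
  forall q p : R -> R, smooth1 q -> smooth1 p ->
  (forall t, FH tau a1 a2 a3 a4 H xi eta nu q p t = 0) ->
  (forall t, Sp tau (Pfi tau a1 a2 a3 a4 H xi eta nu q p) t
             - Pfi tau a1 a2 a3 a4 H xi eta nu q p t = 0) ->
  forall t, D (Cfi tau a1 a2 a3 a4 H xi eta nu q p) t = 0.
Proof.
move=> _ sH sxi seta snu hOm q p sq sp hF hP t.
have hO := hOm q p sq sp t; clear hOm.
have {hF} hF := hF t; have {hP} hP := hP t.
have [dq dDq] := @sm1 R q sq; have [dp dDp] := @sm1 R p sp.
have dxs := fun x => @d_along R xi q p x sxi dq dp.
have des := fun x => @d_along R eta q p x seta dq dp.
have dns := fun x => @d_along R nu q p x snu dq dp.
have dG := fun x => @d_Gx R tau a2 a4 q p x dDq dp.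
have dHa := fun x => @d_Hal R tau H q p x sH dq dp.
have dsp : forall c x, derivable (fun s => p (s + c)) x 1.
  by move=> c x; apply: dshift; exact: dp.
have dA : derivable (fun s => a4 * p (s + tau) + (a2 + a3) * p s + a1 * p (s - tau)) t 1.
  apply: d_add; [apply: d_add|]; apply: d_mul.
  - exact: d_cst.
  - exact: dsp.
  - exact: d_cst.
  - exact: dp.
  - exact: d_cst.
  - exact: dsp.
have dGH : derivable (fun s => Gx tau a2 a4 q p s + Hal tau H q p s) t 1.
  apply: d_add; [exact: dG|exact: dHa].
have hDA : D (fun s => a4 * p (s + tau) + (a2 + a3) * p s + a1 * p (s - tau)) t
    = a4 * D p (t + tau) + (a2 + a3) * D p t + a1 * D p (t - tau).
  have h1 := d_mul (d_cst a4 t) (dsp tau t).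
  have h2 := d_mul (d_cst (a2 + a3) t) (dp t).
  have h3 := d_mul (d_cst a1 t) (dsp (- tau) t).
  rewrite (D_add (d_add h1 h2) h3) (D_add h1 h2).
  rewrite (D_mul (d_cst a4 t) (dsp tau t)) (D_mul (d_cst (a2 + a3) t) (dp t)).
  rewrite (D_mul (d_cst a1 t) (dsp (- tau) t)) !D_cst !Dshift.
  by rewrite !mulr0 !addr0.
rewrite /Cfi (D_sub (d_mul (des t) dA) (d_mul (dxs t) dGH)).
rewrite (D_mul (des t) dA) (D_mul (dxs t) dGH) (D_add (dG t) (dHa t)) hDA.
move: hO hP hF; rewrite /Omega /Pfi /Sp /Sm /FH /dHt /dHq /dHp; cbv beta zeta.
rewrite (D_sub (dxs t) (dshift (along xi q p) (- tau) t (dxs _))).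
rewrite !Dshift !addrK => hO hP hF.
apply: (@comb R _ _ _ hF hO hP).
have -> : Gx tau a2 a4 q p t = a2 * (p t * D q t - p (t - tau) * D q (t - tau))
  + a4 * (p (t + tau) * D q t - p t * D q (t - tau)) by [].
move: (along xi q p t) => X0.
move: (along xi q p (t - tau)) => X1.
move: (along eta q p t) => X2.
move: (along eta q p (t - tau)) => X3.
move: (along nu q p t) => X4.
move: (along nu q p (t - tau)) => X5.
move: (D (along xi q p) t) => X6.
move: (D (along xi q p) (t - tau)) => X7.
move: (D (along eta q p) t) => X8.
move: (D (along eta q p) (t - tau)) => X9.
move: (D (Gx tau a2 a4 q p) t) => X10.
move: (D (Hal tau H q p) t) => X11.
move: (Hal tau H q p t) => X12.
move: (D q t) => X13.
move: (D q (t - tau)) => X14.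
move: (D q (t + tau)) => X15.
move: (D p t) => X16.
move: (D p (t - tau)) => X17.
move: (D p (t + tau)) => X18.
move: (p t) => X19.
move: (p (t - tau)) => X20.
move: (p (t + tau)) => X21.
move: (Hd tau H q p 0 t) => X22.
move: (Hd tau H q p 0 (t + tau)) => X23.
move: (Hd tau H q p 1 t) => X24.
move: (Hd tau H q p 1 (t + tau)) => X25.
move: (Hd tau H q p 2 t) => X26.
move: (Hd tau H q p 2 (t + tau)) => X27.
move: (Hd tau H q p 3 t) => X28.
move: (Hd tau H q p 3 (t + tau)) => X29.
move: (Hd tau H q p 4 t) => X30.
move: (Hd tau H q p 4 (t + tau)) => X31.
move: (Hd tau H q p 5 t) => X32.
move: (Hd tau H q p 5 (t + tau)) => X33.
ring.
Qed.
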